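(* Let $q$ be a prime with $q\equiv 3 \pmod 4$. Let $x^1,y^1,x^2,y^2 \in \mathbb{F}_q^2$ with $\|x^1-y^1\| = \|x^2-y^2\|$ and $x^1-y^1 \ne x^2-y^2$. Then there exists a unique pair $(p,\theta)$ with $p \in \mathbb{F}_q^2$ and $\theta \in SO(2,q)\setminus\{I\}$ such that $f_{p,\theta}(x^1) = x^2$ and $f_{p,\theta}(y^1)=y^2$.
   Context: $\|(a_1,a_2)\| = a_1^2+a_2^2$. $SO(2,q) = \{A \in \mathrm{Mat}_2(\mathbb{F}_q) : A^TA = I, \det A = 1\} = \left\{\begin{pmatrix} a & -b\\ b & a\end{pmatrix} : a^2+b^2=1\right\}$. For $p \in \mathbb{F}_q^2$ (column vector) and $\theta \in SO(2,q)$, $f_{p,\theta}:\mathbb{F}_q^2\to\mathbb{F}_q^2$ is $f_{p,\theta}(x) = \theta(x-p)+p$. *)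

(* Defs.v *)
From mathcomp Require Import all_boot all_algebra.
Set Implicit Arguments. Unset Strict Implicit. Unset Printing Implicit Defensive.
Import GRing.Theory.
Local Open Scope ring_scope.

Definition sqnorm (F : fieldType) (a : 'cV[F]_2) : F :=
  a ord0 ord0 ^+ 2 + a (lift ord0 ord0) ord0 ^+ 2.

Definition SO2 (F : fieldType) : pred 'M[F]_2 :=
  fun A => (A^T *m A == 1%:M) && (\det A == 1).

Definition frot (F : fieldType) (p : 'cV[F]_2) (th : 'M[F]_2) (x : 'cV[F]_2)
  : 'cV[F]_2 := th *m (x - p) + p.

(* Main.v *)
Require Import Defs.
From mathcomp Require Import all_boot all_algebra all_field.
From mathcomp Require Import ring.
Import GRing.Theory.
Local Open Scope ring_scope.
Section S.
Variable F : fieldType.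
Notation i0 := (ord0 : 'I_2).
Notation i1 := (lift ord0 ord0 : 'I_2).
Lemma ord2P (i : 'I_2) : i = i0 \/ i = i1.
Proof. case: i => [[|[|n]]] Hi; [left|right|]; try exact: val_inj. by []. Qed.
Lemma det22 (A : 'M[F]_2) : \det A = A i0 i0 * A i1 i1 - A i0 i1 * A i1 i0.
Proof.
rewrite (expand_det_row _ ord0) !big_ord_recl big_ord0 /cofactor !det_mx11 !mxE /=.
have -> : (lift (lift ord0 ord0) 0 : 'I_2) = ord0 by apply/val_inj.
have -> : (lift ord0 0 : 'I_2) = i1 by apply/val_inj.
rewrite !expr0 expr1; ring.
Qed.
Lemma cvP2 (u v : 'cV[F]_2) : u i0 ord0 = v i0 ord0 -> u i1 ord0 = v i1 ord0 -> u = v.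
Proof. move=> H0 H1; apply/matrixP => i j; rewrite (ord1 j); by case: (ord2P i) => ->. Qed.
Lemma mxP2 (A B : 'M[F]_2) : A i0 i0 = B i0 i0 -> A i0 i1 = B i0 i1 ->
  A i1 i0 = B i1 i0 -> A i1 i1 = B i1 i1 -> A = B.
Proof. move=> H1 H2 H3 H4; apply/matrixP => i j; by case: (ord2P i) => ->; case: (ord2P j) => ->. Qed.
Lemma mulmx2 (A : 'M[F]_2) (B : 'M[F]_(2, 2)) i j :
  (A *m B) i j = A i i0 * B i0 j + A i i1 * B i1 j.
Proof. by rewrite mxE !big_ord_recl big_ord0 addr0. Qed.
Lemma mulmxv2 (A : 'M[F]_2) (B : 'cV[F]_2) i :
  (A *m B) i ord0 = A i i0 * B i0 ord0 + A i i1 * B i1 ord0.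
Proof. by rewrite mxE !big_ord_recl big_ord0 addr0. Qed.
Lemma SO2E (A : 'M[F]_2) : SO2 A ->
  [/\ A i1 i1 = A i0 i0, A i0 i1 = - A i1 i0 & A i0 i0 ^+ 2 + A i1 i0 ^+ 2 = 1].
Proof.
case/andP => /eqP /matrixP H /eqP; rewrite det22 => Hd.
have H00 := H i0 i0; have H01 := H i0 i1; have H11 := H i1 i1.
rewrite !mulmx2 !mxE /= ?mulr1n ?mulr0n in H00 H01 H11.
move: H00 H01 H11 Hd; move: (A i0 i0) (A i1 i0) (A i0 i1) (A i1 i1) => a b c d H00 H01 H11 Hd.
have {}Hd : a * d - c * b = 1 := Hd. have e1 : a^+2 + b^+2 - 1 = 0 by rewrite -H00 !expr2 ?subrr.
have e2 : a * d - c * b - 1 = 0 by rewrite Hd subrr.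
have e3 : a * c + b * d = 0 by rewrite H01.
split.
- apply/eqP; rewrite -subr_eq0; apply/eqP.
  have -> : d - a = - (d * (a^+2 + b^+2 - 1) - a * (a * d - c * b - 1) - b * (a * c + b * d)) by ring.
  by rewrite e1 e2 e3; ring.
- apply/eqP; rewrite -subr_eq0; apply/eqP.
  have -> : c - - b = - b * (a * d - c * b - 1) + a * (a * c + b * d) - c * (a^+2 + b^+2 - 1) by ring.
  by rewrite e1 e2 e3; ring.
- by rewrite !expr2.
Qed.

Definition c0 (v : 'cV[F]_2) := v i0 ord0.
Definition c1 (v : 'cV[F]_2) := v i1 ord0.
Lemma cvP2' (u v : 'cV[F]_2) : c0 u = c0 v -> c1 u = c1 v -> u = v.
Proof. exact: cvP2. Qed.
Lemma c0B u v : c0 (u - v) = c0 u - c0 v. Proof. by rewrite /c0 !mxE. Qed.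
Lemma c1B u v : c1 (u - v) = c1 u - c1 v. Proof. by rewrite /c1 !mxE. Qed.
Lemma sqnormE v : sqnorm v = c0 v ^+ 2 + c1 v ^+ 2. Proof. by []. Qed.
Lemma frot0 p A x : c0 (frot p A x) = A i0 i0 * (c0 x - c0 p) + A i0 i1 * (c1 x - c1 p) + c0 p.
Proof. by rewrite /c0 /c1 /frot mxE mulmxv2 !mxE. Qed.
Lemma frot1 p A x : c1 (frot p A x) = A i1 i0 * (c0 x - c0 p) + A i1 i1 * (c1 x - c1 p) + c1 p.
Proof. by rewrite /c0 /c1 /frot mxE mulmxv2 !mxE. Qed.
Definition mkv (u v : F) : 'cV[F]_2 := \col_(i < 2) (if i == i0 then u else v).
Lemma mkv0 u v : c0 (mkv u v) = u. Proof. by rewrite /c0 mxE. Qed.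
Lemma mkv1 u v : c1 (mkv u v) = v. Proof. by rewrite /c1 mxE. Qed.
Definition mk2 (a b c d : F) : 'M[F]_2 :=
  \matrix_(i, j) (if i == i0 then (if j == i0 then a else b) else (if j == i0 then c else d)).
Lemma mk2E a b c d : [/\ mk2 a b c d i0 i0 = a, mk2 a b c d i0 i1 = b,
   mk2 a b c d i1 i0 = c & mk2 a b c d i1 i1 = d].
Proof. by rewrite !mxE. Qed.

Hypothesis hneg : forall a b : F, a ^+ 2 + b ^+ 2 = 0 -> a = 0.
Lemma hneg' (a b : F) : a ^+ 2 + b ^+ 2 = 0 -> b = 0.
Proof. by rewrite addrC => /hneg. Qed.

Theorem main (x1 y1 x2 y2 : 'cV[F]_2) :
  sqnorm (x1 - y1) = sqnorm (x2 - y2) ->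
  x1 - y1 <> x2 - y2 ->
  exists! pt : 'cV[F]_2 * 'M[F]_2,
    [/\ SO2 pt.2, pt.2 <> 1%:M,
        frot pt.1 pt.2 x1 = x2 & frot pt.1 pt.2 y1 = y2].
Proof.
rewrite !sqnormE !c0B !c1B => Hn Hne.
have [N HN] : exists N, N = (c0 x1 - c0 y1)^+2 + (c1 x1 - c1 y1)^+2 by eexists.
have N0 : N != 0.
  apply/eqP => N0; apply: Hne.
  have H1 : (c0 x1 - c0 y1)^+2 + (c1 x1 - c1 y1)^+2 = 0 by rewrite -HN.
  have H2 : (c0 x2 - c0 y2)^+2 + (c1 x2 - c1 y2)^+2 = 0 by rewrite -Hn.
  apply: cvP2'; rewrite ?c0B ?c1B.
    by rewrite (hneg _ _ H1) (hneg _ _ H2).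
  by rewrite (hneg' _ _ H1) (hneg' _ _ H2).
have [a Ha] : exists a, a = ((c0 x1 - c0 y1)*(c0 x2 - c0 y2) + (c1 x1 - c1 y1)*(c1 x2 - c1 y2))/N by eexists.
have [b Hb] : exists b, b = ((c0 x1 - c0 y1)*(c1 x2 - c1 y2) - (c1 x1 - c1 y1)*(c0 x2 - c0 y2))/N by eexists.
have R0 : a * (c0 x1 - c0 y1) - b * (c1 x1 - c1 y1) = c0 x2 - c0 y2.
  rewrite Ha Hb HN; field; by rewrite -HN.
have R1 : b * (c0 x1 - c0 y1) + a * (c1 x1 - c1 y1) = c1 x2 - c1 y2.
  rewrite Ha Hb HN; field; by rewrite -HN.
have Hab : a^+2 + b^+2 = 1.
  have -> : a^+2+b^+2 = ((c0 x2 - c0 y2)^+2 + (c1 x2 - c1 y2)^+2)/N.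
    rewrite Ha Hb HN; field; by rewrite -HN.
  by rewrite -Hn -HN divff.
have [D HD] : exists D, D = (1-a)^+2 + b^+2 by eexists.
have D0 : D != 0.
  apply/eqP => D0.
  have H : (1-a)^+2+b^+2 = 0 by rewrite -HD.
  have a1 := hneg _ _ H; have b0 := hneg' _ _ H.
  have a1' : a = 1 by move/eqP: a1; rewrite subr_eq0 => /eqP <-.
  apply: Hne; apply: cvP2'; rewrite ?c0B ?c1B.
  - by rewrite -R0 a1' b0; ring.
  - by rewrite -R1 a1' b0; ring.
have Yof : forall p th, th = mk2 a (-b) b a -> frot p th x1 = x2 -> frot p th y1 = y2.
  move=> p th -> Hx; have [E00 E01 E10 E11] := mk2E a (-b) b a.
  apply: cvP2'.
  - move/(congr1 c0): Hx; rewrite !frot0 E00 E01 => Hx.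
    have -> : c0 y2 = c0 x2 - (a * (c0 x1 - c0 y1) - b * (c1 x1 - c1 y1)) by rewrite R0; ring.
    rewrite -Hx; ring.
  - move/(congr1 c1): Hx; rewrite !frot1 E10 E11 => Hx.
    have -> : c1 y2 = c1 x2 - (b * (c0 x1 - c0 y1) + a * (c1 x1 - c1 y1)) by rewrite R1; ring.
    rewrite -Hx; ring.
pose r0 := c0 x2 - (a * c0 x1 - b * c1 x1).
pose r1 := c1 x2 - (b * c0 x1 + a * c1 x1).
have [E00 E01 E10 E11] := mk2E a (-b) b a.
have Hx : frot (mkv (((1-a)*r0 - b*r1)/D) ((b*r0 + (1-a)*r1)/D)) (mk2 a (-b) b a) x1 = x2.
  apply: cvP2'; rewrite ?frot0 ?frot1 ?E00 ?E01 ?E10 ?E11 ?mkv0 ?mkv1 /r0 /r1 HD; field; by rewrite -HD.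
exists (mkv (((1-a)*r0 - b*r1)/D) ((b*r0 + (1-a)*r1)/D), mk2 a (-b) b a); split.
  split => //=; last exact: Yof.
  - apply/andP; split; apply/eqP; last by rewrite det22 E00 E01 E10 E11 -Hab; ring.
    apply: mxP2; rewrite !mulmx2 !mxE /= ?mulr1n ?mulr0n ?E00 ?E01 ?E10 ?E11.
    + by rewrite -Hab; ring.
    + ring.
    + ring.
    + by rewrite -Hab; ring.
  - move=> H1.
    have := congr1 (fun M : 'M[F]_2 => M i0 i0) H1; have := congr1 (fun M : 'M[F]_2 => M i1 i0) H1.
    rewrite /= E00 E10 !mxE /= ?mulr1n ?mulr0n => b0 a1.
    apply: Hne; apply: cvP2'; rewrite ?c0B ?c1B.
    + by rewrite -R0 b0 a1; ring.
    + by rewrite -R1 b0 a1; ring.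
move=> [p' th'] [/= Hso _ Fx Fy].
have [E1 E2 E3] := SO2E th' Hso.
have Fx0 := congr1 c0 Fx; have Fx1 := congr1 c1 Fx.
have Fy0 := congr1 c0 Fy; have Fy1 := congr1 c1 Fy.
rewrite !frot0 !frot1 E1 E2 in Fx0 Fx1 Fy0 Fy1.
have R0' : th' i0 i0 * (c0 x1 - c0 y1) - th' i1 i0 * (c1 x1 - c1 y1) = c0 x2 - c0 y2.
  by rewrite -Fx0 -Fy0; ring.
have R1' : th' i1 i0 * (c0 x1 - c0 y1) + th' i0 i0 * (c1 x1 - c1 y1) = c1 x2 - c1 y2.
  by rewrite -Fx1 -Fy1; ring.
have Ha' : th' i0 i0 = a.
  rewrite Ha -R0' -R1' -[LHS](mulfK N0); congr (_ / _); rewrite HN; ring.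
have Hb' : th' i1 i0 = b.
  rewrite Hb -R0' -R1' -[LHS](mulfK N0); congr (_ / _); rewrite HN; ring.
rewrite Ha' Hb' in Fx0 Fx1.
congr pair.
- apply: cvP2'; rewrite ?mkv0 ?mkv1 /r0 /r1.
  + rewrite -Fx0 -Fx1 HD; field; by rewrite -HD.
  + rewrite -Fx0 -Fx1 HD; field; by rewrite -HD.
- by apply: mxP2; rewrite ?E00 ?E01 ?E10 ?E11 ?E1 ?E2 ?Ha' ?Hb'.
Qed.
End S.
Lemma hnegFq (q : nat) (hq : prime q) (hq3 : (q %% 4 = 3)%N) (a b : 'F_q) :
  a ^+ 2 + b ^+ 2 = 0 -> a = 0.
Proof.
move=> H; apply/eqP; apply/negPn/negP => a0.
pose x := b / a.
have x2 : x ^+ 2 = -1.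
  have hb : b ^+ 2 = - a ^+ 2 by apply/eqP; rewrite -subr_eq0 opprK addrC H.
  rewrite /x expr_div_n hb mulNr divff // expf_neq0 //.
have hx := expf_card x; rewrite card_Fp // in hx.
have hq' : q = ((q %/ 4) * 4 + 3)%N by rewrite {1}(divn_eq q 4) hq3.
have x4 : x ^+ 4 = 1 by rewrite (exprM x 2 2) x2; ring.
have {}hx : x ^+ ((q %/ 4) * 4 + 3) = x by rewrite -hq'.
rewrite exprD mulnC exprM x4 expr1n mul1r in hx.
have x3 : x ^+ 3 = - x by rewrite exprS x2; ring.
rewrite x3 in hx.
have h2 : (2%:R : 'F_q) != 0.
  rewrite -(dvdn_pcharf (pchar_Fp hq)); apply/negP => /dvdn_leq => /(_ isT).
  have : (3 <= q)%N by rewrite -hq3 leq_mod.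
  by case: q {hq hq3 hx hq' x2 x3 x4 H a0 a b x} => [|[|[|q]]].
have : x * 2%:R = 0 by rewrite mulr_natr mulr2n -{1}hx addNr.
move/eqP; rewrite mulf_eq0 (negPf h2) orbF => /eqP x0.
move: x2; rewrite x0 expr0n /= => /eqP; rewrite eq_sym oppr_eq0 oner_eq0 //.
Qed.

Theorem lemma2p1 (q : nat) (hq : prime q) (hq3 : (q %% 4 = 3)%N)
  (x1 y1 x2 y2 : 'cV['F_q]_2) :
  sqnorm (x1 - y1) = sqnorm (x2 - y2) ->
  x1 - y1 <> x2 - y2 ->
  exists! pt : 'cV['F_q]_2 * 'M['F_q]_2,
    [/\ SO2 pt.2, pt.2 <> 1%:M,
        frot pt.1 pt.2 x1 = x2 & frot pt.1 pt.2 y1 = y2].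
Proof. exact: (@main _ (@hnegFq q hq hq3)). Qed.
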